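(* Let $l\ge1$, $L=a^l$ on $\mathcal H=\ell^2(\mathbb N)$ (single jump operator, $H=0$), $Q$ the closure of $L^\dagger L=a^{\dagger l}a^l$, $G=-\tfrac12Q$ and $\Lambda=\mathrm{Id}+a^{l\dagger}a^l$. Then: for every $k\ge0$, $\mathcal H^k=\{\sum_m\psi_m|m\rangle:\sum_m(1+m^{kl})|\psi_m|^2<\infty\}$; $a^{l\dagger}a^l$ with domain $\mathcal H^2$ is self-adjoint; $L\in B(\mathcal H^{m+1},\mathcal H^m)$ for all $m\in\mathbb N$; and for all $u\in\mathcal H^6$, $$2\mathrm{Re}\langle\Lambda^2Gu|\Lambda^2u\rangle+\|\Lambda^2Lu\|^2\le0 .$$ Consequently Assumption A holds with $\gamma=0$.
   Context: $(|m\rangle)_{m\in\mathbb N}$ is the Fock (canonical) basis of $\ell^2(\mathbb N)$, $a|m+1\rangle=\sqrt{m+1}|m\rangle$, $a|0\rangle=0$, $a^\dagger|m\rangle=\sqrt{m+1}|m+1\rangle$. For $\Lambda\ge\mathrm{Id}$ self-adjoint, $\mathcal H^n=\mathcal D(\Lambda^{n/2})$ with norm $\|\Lambda^{n/2}u\|$, $B(\mathcal H^m,\mathcal H^n)$ the bounded operators between them. Assumption A (no Hamiltonian): jump operators $L_j$ closed; $\bigcap_j\mathcal D(L_j^\dagger L_j)$ dense and $\sum_jL_j^\dagger L_j$ essentially self-adjoint on it with closure $Q$; $G=-\tfrac12Q$; $\Lambda=Q+\mathrm{Id}$; $L_j\in B(\mathcal H^5,\mathcal H^4)$; and there is $\gamma\ge0$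 with $2\mathrm{Re}\langle\Lambda^2Gu|\Lambda^2u\rangle+\sum_j\|\Lambda^2L_ju\|^2\le\gamma\|\Lambda^2u\|^2$ for all $u\in\mathcal H^6$. *)

(* Defs.v *)
(* Vectors of l^2(N) are complex sequences u : nat -> C in the Fock basis,
   u = sum_m u m |m>.  Operators are given by their (formal, componentwise)
   action on sequences; domains are stated explicitly. *)
From Stdlib Require Import Reals.
From Coquelicot Require Import Coquelicot.
Open Scope R_scope.

Definition seqC := nat -> C.

Definition sqn (z : C) : R := Cmod z ^ 2.

Definition l2 (u : seqC) : Prop := ex_series (fun m => sqn (u m)).
Definition norm2 (u : seqC) : R := Series (fun m => sqn (u m)).

Definition inner (u v : seqC) : C :=
  (Series (fun m => Re (Cmult (Cconj (u m)) (v m))),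
   Series (fun m => Im (Cmult (Cconj (u m)) (v m)))).

Definition seq_sub (u v : seqC) : seqC := fun m => Cminus (u m) (v m).
Definition seq_add (u v : seqC) : seqC := fun m => Cplus (u m) (v m).
Definition seq_scal (c : C) (u : seqC) : seqC := fun m => Cmult c (u m).

(* annihilation operator: a|m+1> = sqrt(m+1)|m>, a|0> = 0,
   i.e. (a u)_m = sqrt(m+1) u_(m+1) *)
Definition ann (u : seqC) : seqC :=
  fun m => Cmult (RtoC (sqrt (INR (S m)))) (u (S m)).

(* creation operator: a^dag|m> = sqrt(m+1)|m+1>,
   i.e. (a^dag u)_0 = 0, (a^dag u)_(m+1) = sqrt(m+1) u_m *)
Definition cre (u : seqC) : seqC :=
  fun m => match m with
           | O => RtoC 0
           | S k => Cmult (RtoC (sqrt (INR (S k)))) (u k)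
           end.

Definition Lop (l : nat) (u : seqC) : seqC := Nat.iter l ann u.
Definition LdagL (l : nat) (u : seqC) : seqC := Nat.iter l cre (Lop l u).
Definition Gop (l : nat) (u : seqC) : seqC := seq_scal (RtoC (- / 2)) (LdagL l u).
Definition Lam (l : nat) (u : seqC) : seqC := seq_add u (LdagL l u).
Definition Lam_pow (l j : nat) (u : seqC) : seqC := Nat.iter j (Lam l) u.

(* H^k = D(Lambda^{k/2}).  For k = 2j: u with Lambda^i u in l^2 for all i <= j.
   For k = 2j+1: additionally Lambda^j u in D(Lambda^{1/2}) = D(L) (form domain),
   i.e. L Lambda^j u in l^2, since ||Lambda^{1/2} v||^2 = ||v||^2 + ||L v||^2. *)
Definition inH (l k : nat) (u : seqC) : Prop :=
  (forall i, (i <= Nat.div2 k)%nat -> l2 (Lam_pow l i u)) /\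
  (Nat.odd k = true -> l2 (Lop l (Lam_pow l (Nat.div2 k) u))).

(* ||u||_{H^k} = ||Lambda^{k/2} u|| *)
Definition normH (l k : nat) (u : seqC) : R :=
  sqrt (norm2 (Lam_pow l (Nat.div2 k) u)
        + (if Nat.odd k then norm2 (Lop l (Lam_pow l (Nat.div2 k) u)) else 0)).

Definition dense_dom (D : seqC -> Prop) : Prop :=
  (forall u, D u -> l2 u) /\
  (forall v eps, l2 v -> 0 < eps -> exists u, D u /\ norm2 (seq_sub u v) < eps).

Definition adj_graph (D : seqC -> Prop) (T : seqC -> seqC) (v w : seqC) : Prop :=
  l2 v /\ l2 w /\ forall u, D u -> inner v (T u) = inner w u.

Definition self_adjoint (D : seqC -> Prop) (T : seqC -> seqC) : Prop :=
  dense_dom D /\ (forall u, D u -> l2 (T u)) /\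
  (forall v w, adj_graph D T v w <-> (D v /\ w = T v)).

(* Main.v *)
Require Import Defs.
From Stdlib Require Import Reals Lra Lia FunctionalExtensionality.
From Coquelicot Require Import Coquelicot.
Open Scope R_scope.

Fixpoint ff (l n : nat) : R :=
  match l with O => 1 | S l' => match n with O => 0 | S k => INR (S k) * ff l' k end end.
Fixpoint rf (l m : nat) : R :=
  match l with O => 1 | S l' => INR (S m) * rf l' (S m) end.

Lemma ff_nonneg l n : 0 <= ff l n.
Proof. revert n; induction l; intros [|k]; cbn [ff rf pow]; try lra.
  apply Rmult_le_pos; [apply pos_INR| apply IHl]. Qed.
Lemma rf_nonneg l m : 0 <= rf l m.
Proof. revert m; induction l; intros m; cbn [ff rf pow]; try lra.
  apply Rmult_le_pos; [apply pos_INR| apply IHl]. Qed.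
Lemma ff_small l n : (n < l)%nat -> ff l n = 0.
Proof. revert n; induction l; intros [|k] H; cbn [ff rf pow]; try lia; try lra.
  rewrite IHl by lia; ring. Qed.
Lemma rf_last l m : rf (S l) m = rf l m * INR (m + S l).
Proof. revert m; induction l; intros m.
  - cbn [rf]. replace (m+1)%nat with (S m) by lia. ring.
  - change (rf (S (S l)) m) with (INR (S m) * rf (S l) (S m)). rewrite IHl.
    replace (S m + S l)%nat with (m + S (S l))%nat by lia. cbn [ff rf pow]. ring. Qed.
Lemma rf_ff l m : rf l m = ff l (m + l).
Proof. revert m; induction l; intros m; [reflexivity|].
  rewrite rf_last, IHl, Nat.add_succ_r. cbn [ff]. rewrite <- (Nat.add_succ_r m l) at 1.
  replace (m + S l)%nat with (S (m+l)) by lia. ring. Qed.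
Lemma ff_mono_S l n : ff l n <= ff l (S n).
Proof. revert n; induction l; intros [|k]; cbn [ff rf pow]; try lra.
  - apply Rmult_le_pos; [apply pos_INR| apply ff_nonneg].
  - apply Rmult_le_compat; try apply pos_INR; try apply ff_nonneg.
    + apply le_INR; lia.
    + apply IHl. Qed.
Lemma ff_mono l n m : (n <= m)%nat -> ff l n <= ff l m.
Proof. induction 1; [lra| eapply Rle_trans; [apply IHle| apply ff_mono_S]]. Qed.
Lemma ff_upper l n : ff l n <= INR n ^ l.
Proof. revert n; induction l; intros [|k]; cbn [ff rf pow]; try lra.
  - rewrite Rmult_0_l; lra.
  - apply Rmult_le_compat_l; [apply pos_INR|]. eapply Rle_trans; [apply IHl|].
    apply pow_incr; split; [apply pos_INR| apply le_INR; lia]. Qed.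
Lemma ff_lower l n : (l <= n)%nat -> (INR n - INR l + 1) ^ l <= ff l n.
Proof. revert n; induction l; intros [|k] H; cbn [ff rf pow]; try lra; try lia.
  pose proof (le_INR l k ltac:(lia)). pose proof (pos_INR l). rewrite !S_INR in *.
  apply Rmult_le_compat.
  - lra.
  - apply pow_le. lra.
  - lra.
  - replace (INR k + 1 - (INR l + 1) + 1) with (INR k - INR l + 1) by ring.
    apply IHl; lia. Qed.

Lemma Ceq (z w : C) : fst z = fst w -> snd z = snd w -> z = w.
Proof. destruct z, w; simpl; intros -> ->; reflexivity. Qed.

Lemma sqn_eq z : sqn z = fst z ^ 2 + snd z ^ 2.
Proof. unfold sqn, Cmod. rewrite pow2_sqrt; [reflexivity| nra]. Qed.
Lemma sqn_nonneg z : 0 <= sqn z.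
Proof. rewrite sqn_eq; nra. Qed.
Lemma sqn_sc r z : sqn (Cmult (RtoC r) z) = r ^ 2 * sqn z.
Proof. rewrite !sqn_eq; destruct z; unfold Cmult, RtoC; simpl; ring. Qed.

Lemma Lop_val l v n : Lop l v n = Cmult (RtoC (sqrt (rf l n))) (v (n + l)%nat).
Proof. revert n; induction l; intros n.
  - unfold Lop; simpl Nat.iter. cbn [rf]. rewrite sqrt_1, Nat.add_0_r.
    destruct (v n); unfold Cmult, RtoC; apply Ceq; simpl; ring.
  - change (Lop (S l) v n) with (ann (Lop l v) n). unfold ann. rewrite IHl.
    change (rf (S l) n) with (INR (S n) * rf l (S n)).
    rewrite sqrt_mult by (apply pos_INR || apply rf_nonneg).
    replace (S n + l)%nat with (n + S l)%nat by lia.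
    destruct (v (n + S l)%nat); unfold Cmult, RtoC; apply Ceq; simpl; ring. Qed.

Lemma cre_val l v n : Nat.iter l cre v n = Cmult (RtoC (sqrt (ff l n))) (v (n - l)%nat).
Proof. revert n; induction l; intros n.
  - simpl Nat.iter. cbn [ff]. rewrite sqrt_1, Nat.sub_0_r.
    destruct (v n); unfold Cmult, RtoC; apply Ceq; simpl; ring.
  - change (Nat.iter (S l) cre v n) with (cre (Nat.iter l cre v) n). destruct n as [|k].
    + cbn [ff]. rewrite sqrt_0. unfold cre. destruct (v _); unfold Cmult, RtoC; apply Ceq; simpl; ring.
    + unfold cre at 1. rewrite IHl. cbn [ff].
      rewrite sqrt_mult by (apply pos_INR || apply ff_nonneg).
      change (S k - S l)%nat with (k - l)%nat.
      destruct (v (k - l)%nat); unfold Cmult, RtoC; apply Ceq; simpl; ring. Qed.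

Lemma LdagL_val l u n : LdagL l u n = Cmult (RtoC (ff l n)) (u n).
Proof. unfold LdagL. rewrite cre_val, Lop_val.
  destruct (Compare_dec.le_lt_dec l n) as [H|H].
  - rewrite Nat.sub_add by lia. rewrite rf_ff, Nat.sub_add by lia.
    pose proof (sqrt_sqrt (ff l n) (ff_nonneg l n)).
    set (s := sqrt (ff l n)) in *. destruct (u n); unfold Cmult, RtoC; apply Ceq; simpl; rewrite <- H0; ring.
  - rewrite ff_small by lia. rewrite sqrt_0.
    destruct (u _), (u n); unfold Cmult, RtoC; apply Ceq; simpl; ring. Qed.

Lemma Lam_pow_val l i v n :
  Lam_pow l i v n = Cmult (RtoC ((1 + ff l n) ^ i)) (v n).
Proof. induction i.
  - simpl. destruct (v n); unfold Cmult, RtoC; apply Ceq; simpl; ring.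
  - change (Lam_pow l (S i) v n) with (Lam l (Lam_pow l i v) n).
    unfold Lam, seq_add. rewrite LdagL_val, IHi.
    destruct (v n); unfold Cmult, Cplus, RtoC; apply Ceq; simpl; ring. Qed.

Definition W l k n := (1 + ff l n) ^ k.
Lemma W_ge1 l k n : 1 <= W l k n.
Proof. apply pow_R1_Rle. pose proof (ff_nonneg l n); lra. Qed.

Lemma sqn_Lam_pow l i u n : sqn (Lam_pow l i u n) = W l (2 * i) n * sqn (u n).
Proof. rewrite Lam_pow_val, sqn_sc. unfold W. rewrite Nat.mul_comm, pow_mult. reflexivity. Qed.
Lemma sqn_Lop l v n : sqn (Lop l v n) = ff l (n + l) * sqn (v (n + l)%nat).
Proof. rewrite Lop_val, sqn_sc, pow2_sqrt by apply rf_nonneg. rewrite rf_ff; reflexivity. Qed.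

Lemma exR_le (a b : nat -> R) : (forall n, 0 <= a n <= b n) -> ex_series b -> ex_series a.
Proof. intros H Hb. apply (ex_series_le a b); [|exact Hb].
  intros n. change (norm (a n)) with (Rabs (a n)). rewrite Rabs_pos_eq; apply H. Qed.
Lemma exR_plus (a b : nat -> R) : ex_series a -> ex_series b -> ex_series (fun n => a n + b n).
Proof. intros Ha Hb. exact (ex_series_plus a b Ha Hb). Qed.
Lemma exR_scal (c : R) (a : nat -> R) : ex_series a -> ex_series (fun n => c * a n).
Proof. intros Ha. exact (ex_series_scal_l c a Ha). Qed.
Lemma is_series_zero : is_series (fun _ : nat => 0) 0.
Proof. unfold is_series. apply (filterlim_ext (fun _ => 0)).
  - intros n. symmetry. rewrite sum_n_const. ring.
  - apply filterlim_const. Qed.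
Lemma ex_series_zero : ex_series (fun _ : nat => 0).
Proof. exists 0. apply is_series_zero. Qed.
Lemma Series_zero : Series (fun _ : nat => 0) = 0.
Proof. apply is_series_unique, is_series_zero. Qed.
Lemma sum_f_zero (a : nat -> R) N : (forall k, (k <= N)%nat -> a k = 0) -> sum_f_R0 a N = 0.
Proof. induction N; intros H; simpl. - apply H; lia.
  - rewrite IHN. + rewrite (H (S N)) by lia. ring. + intros; apply H; lia. Qed.
Lemma ex_series_fin (a : nat -> R) N : (forall n, (N < n)%nat -> a n = 0) -> ex_series a.
Proof. intros H. apply (proj2 (ex_series_incr_n a (S N))).
  eapply ex_series_ext; [|exact ex_series_zero]. intros n; simpl. rewrite H; auto; lia. Qed.
Lemma ex_series_shift (a : nat -> R) l : ex_series (fun n => a (n + l)%nat) <-> ex_series a.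
Proof. rewrite (ex_series_incr_n a l). split; apply ex_series_ext; intros; f_equal; lia. Qed.
Lemma Series_shift0 (b : nat -> R) l : (0 < l)%nat -> (forall n, (n < l)%nat -> b n = 0) -> ex_series b ->
  Series (fun n => b (n + l)%nat) = Series b.
Proof. intros Hl Hz Hb. rewrite (Series_incr_n b l Hl Hb). rewrite sum_f_zero.
  - rewrite Rplus_0_l. apply Series_ext; intros; f_equal; lia.
  - intros; apply Hz; lia. Qed.
Lemma Series_delta (a : nat -> R) m : (forall n, n <> m -> a n = 0) -> Series a = a m.
Proof. intros H. assert (Ha : ex_series a) by (apply (ex_series_fin a m); intros; apply H; lia).
  rewrite (Series_incr_n a (S m) ltac:(lia) Ha). simpl Nat.pred.
  rewrite (Series_ext _ (fun _ => 0)), Series_zero by (intros; apply H; lia).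
  destruct m as [|m']; simpl. - ring.
  - rewrite sum_f_zero by (intros; apply H; lia). ring. Qed.
Lemma exR_ext (a b : nat -> R) : (forall n, a n = b n) -> ex_series a -> ex_series b.
Proof. intros H; apply ex_series_ext; exact H. Qed.

Lemma W_S l k n : W l (S k) n = W l k n + ff l n * W l k n.
Proof. unfold W; simpl; ring. Qed.
Lemma W_nonneg l k n : 0 <= W l k n.
Proof. pose proof (W_ge1 l k n); lra. Qed.
Lemma W_mono_k l k k' n : (k <= k')%nat -> W l k n <= W l k' n.
Proof. intros; unfold W; apply Rle_pow; [pose proof (ff_nonneg l n); lra| assumption]. Qed.
Lemma W_mono_n l k n n' : (n <= n')%nat -> W l k n <= W l k n'.
Proof. intros; unfold W; apply pow_incr. pose proof (ff_nonneg l n); pose proof (ff_mono l n n' H); lra. Qed.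

Lemma odd_S2 j : Nat.odd (S (2 * j)) = true.
Proof. rewrite <- Nat.add_1_r; apply Nat.odd_odd. Qed.

Lemma inH_char l k u : inH l k u <-> ex_series (fun n => W l k n * sqn (u n)).
Proof. destruct (Nat.Even_or_Odd k) as [[j ->]|[j ->]]; unfold inH.
  - rewrite Nat.div2_double, Nat.odd_even. split.
    + intros [H _]. specialize (H j (le_n j)). unfold l2 in H. revert H; apply exR_ext.
      intros; simpl; rewrite sqn_Lam_pow; reflexivity.
    + intros H. split; [|discriminate]. intros i Hi. unfold l2.
      apply (exR_le _ (fun n => W l (2*j) n * sqn (u n))); [|exact H]. intros n. rewrite sqn_Lam_pow.
      pose proof (sqn_nonneg (u n)). split; [apply Rmult_le_pos; [apply W_nonneg|lra]|].
      apply Rmult_le_compat_r; [lra| apply W_mono_k; lia].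
  - rewrite Nat.add_1_r, Nat.div2_succ_double, odd_S2.
    set (b := fun n => ff l n * W l (2*j) n * sqn (u n)).
    assert (E : l2 (Lop l (Lam_pow l j u)) <-> ex_series b).
    { unfold l2. rewrite <- (ex_series_shift b l). split; apply ex_series_ext; intros n;
      rewrite ?sqn_Lop, ?sqn_Lam_pow; unfold b; rewrite ?Rmult_assoc; reflexivity. }
    rewrite E. split.
    + intros [H1 H2]. specialize (H1 j (le_n j)). specialize (H2 eq_refl). unfold l2 in H1.
      assert (H1' : ex_series (fun n => W l (2*j) n * sqn (u n))).
      { revert H1; apply exR_ext. intros; rewrite sqn_Lam_pow; reflexivity. }
      revert H1' H2; intros H1' H2; generalize (exR_plus _ _ H1' H2); apply exR_ext. intros n. unfold b. rewrite W_S. ring.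
    + intros H. assert (HB : forall n, 0 <= ff l n * W l (2*j) n * sqn (u n)) by
        (intros; apply Rmult_le_pos; [apply Rmult_le_pos; [apply ff_nonneg|apply W_nonneg]| apply sqn_nonneg]).
      split; [intros i Hi; unfold l2|intros _].
      * apply (exR_le _ (fun n => W l (S (2 * j)) n * sqn (u n))); [|exact H]. intros n. rewrite sqn_Lam_pow. pose proof (sqn_nonneg (u n)). pose proof (HB n).
        split; [apply Rmult_le_pos; [apply W_nonneg|lra]|].
        rewrite W_S. assert (W l (2*i) n <= W l (2*j) n) by (apply W_mono_k; lia). nra.
      * apply (exR_le _ (fun n => W l (S (2 * j)) n * sqn (u n))); [|exact H]. intros n. unfold b. pose proof (sqn_nonneg (u n)). pose proof (HB n).
        split; [lra|]. rewrite W_S. pose proof (W_nonneg l (2*j) n). nra.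
Qed.

Lemma normH_eq l k u : (0 < l)%nat -> inH l k u ->
  normH l k u = sqrt (Series (fun n => W l k n * sqn (u n))).
Proof. intros Hl Hu. apply inH_char in Hu. unfold normH.
  destruct (Nat.Even_or_Odd k) as [[j ->]|[j ->]].
  - rewrite Nat.div2_double, Nat.odd_even, Rplus_0_r. f_equal. unfold norm2.
    apply Series_ext; intros; apply sqn_Lam_pow.
  - rewrite Nat.add_1_r in *. rewrite Nat.div2_succ_double, odd_S2. f_equal. unfold norm2.
    set (b := fun n => ff l n * W l (2*j) n * sqn (u n)).
    assert (HB : forall n, 0 <= b n) by
        (intros; apply Rmult_le_pos; [apply Rmult_le_pos; [apply ff_nonneg|apply W_nonneg]| apply sqn_nonneg]).
    assert (Hb : ex_series b).
    { apply (exR_le _ (fun n => W l (S (2*j)) n * sqn (u n))); [|exact Hu]. intros n; split; [apply HB|].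
      unfold b; rewrite W_S. pose proof (W_nonneg l (2*j) n); pose proof (sqn_nonneg (u n)); nra. }
    assert (Ha : ex_series (fun n => W l (2*j) n * sqn (u n))).
    { apply (exR_le _ (fun n => W l (S (2*j)) n * sqn (u n))); [|exact Hu]. intros n.
      pose proof (HB n). unfold b in H.
      pose proof (W_nonneg l (2*j) n); pose proof (sqn_nonneg (u n)); rewrite W_S; split; nra. }
    rewrite (Series_ext (fun n => sqn (Lam_pow l j u n)) (fun n => W l (2*j) n * sqn (u n)))
      by (intros; apply sqn_Lam_pow).
    rewrite (Series_ext (fun n => sqn (Lop l (Lam_pow l j u) n)) (fun n => b (n + l)%nat))
      by (intros; rewrite sqn_Lop, sqn_Lam_pow; unfold b; ring).
    rewrite Series_shift0; [| assumption | intros n Hn; unfold b; rewrite ff_small by assumption; ring | assumption].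
    rewrite <- Series_plus by assumption. apply Series_ext; intros; unfold b; rewrite W_S; ring.
Qed.

Lemma W_upper l k n : W l k n <= 2 ^ k * (1 + INR n ^ (k * l)).
Proof. unfold W. set (x := INR n ^ l).
  assert (Hx : 0 <= x) by (apply pow_le, pos_INR).
  assert (H1 : (1 + ff l n) ^ k <= (1 + x) ^ k).
  { apply pow_incr. pose proof (ff_nonneg l n); pose proof (ff_upper l n); unfold x; lra. }
  rewrite Nat.mul_comm, pow_mult. fold x. eapply Rle_trans; [exact H1|].
  assert (Hxk : 0 <= x ^ k) by (apply pow_le; lra).
  assert (H2k : 0 <= 2 ^ k) by (apply pow_le; lra).
  destruct (Rle_dec x 1).
  - assert ((1 + x) ^ k <= 2 ^ k) by (apply pow_incr; lra). nra.
  - assert ((1 + x) ^ k <= (2 * x) ^ k) by (apply pow_incr; lra). rewrite Rpow_mult_distr in H. nra.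
Qed.

Lemma W_lower l k n : (1 <= l)%nat -> 1 + INR n ^ (k * l) <= (1 + INR (2 * l) ^ (k * l)) * W l k n.
Proof. intros Hl. pose proof (W_ge1 l k n) as HW.
  assert (HC : 0 <= INR (2 * l) ^ (k * l)) by (apply pow_le, pos_INR).
  destruct (Compare_dec.le_lt_dec (2 * l) n) as [H|H].
  - assert (Hn2 : INR n / 2 <= INR n - INR l + 1 /\ 0 <= INR n / 2).
    { pose proof (le_INR _ _ H). rewrite mult_INR in H0. simpl (INR 2) in H0. pose proof (pos_INR n). lra. }
    assert (Hf : (INR n / 2) ^ l <= ff l n).
    { eapply Rle_trans; [apply pow_incr; exact (conj (proj2 Hn2) (proj1 Hn2))| apply ff_lower; lia]. }
    assert (Hnl : INR n ^ l <= 2 ^ l * ff l n).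
    { replace (INR n) with (2 * (INR n / 2)) at 1 by field. rewrite Rpow_mult_distr.
      apply Rmult_le_compat_l; [apply pow_le; lra| exact Hf]. }
    assert (Hk : INR n ^ (k * l) <= (2 ^ l) ^ k * ff l n ^ k).
    { rewrite Nat.mul_comm, pow_mult, <- Rpow_mult_distr. apply pow_incr. split; [apply pow_le, pos_INR| exact Hnl]. }
    assert (H2 : (2 ^ l) ^ k <= INR (2 * l) ^ (k * l)).
    { rewrite <- pow_mult, Nat.mul_comm. apply pow_incr. split; [lra|].
      rewrite mult_INR. simpl (INR 2). pose proof (le_INR 1 l Hl). simpl (INR 1) in H0. lra. }
    assert (Hfk : ff l n ^ k <= W l k n).
    { unfold W. apply pow_incr. pose proof (ff_nonneg l n). lra. }
    assert (0 <= ff l n ^ k) by (apply pow_le, ff_nonneg).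
    assert (0 <= (2 ^ l) ^ k) by (apply pow_le, pow_le; lra).
    nra.
  - assert (INR n ^ (k * l) <= INR (2 * l) ^ (k * l)).
    { apply pow_incr. split; [apply pos_INR| apply le_INR; lia]. }
    nra.
Qed.

Lemma claim1 l (hl : (1 <= l)%nat) k u :
  inH l k u <-> ex_series (fun m => (1 + INR m ^ (k * l)) * sqn (u m)).
Proof. rewrite inH_char. split; intros H.
  - apply (exR_le _ (fun n => (1 + INR (2 * l) ^ (k * l)) * (W l k n * sqn (u n)))); [|apply exR_scal, H].
    intros n. pose proof (sqn_nonneg (u n)). pose proof (W_lower l k n hl).
    assert (0 <= INR n ^ (k * l)) by (apply pow_le, pos_INR). split; [nra|].
    rewrite <- Rmult_assoc. apply Rmult_le_compat_r; assumption.
  - apply (exR_le _ (fun n => 2 ^ k * ((1 + INR n ^ (k * l)) * sqn (u n)))); [|apply exR_scal, H].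
    intros n. pose proof (sqn_nonneg (u n)). pose proof (W_upper l k n). pose proof (W_nonneg l k n).
    split; [nra|]. rewrite <- Rmult_assoc. apply Rmult_le_compat_r; assumption.
Qed.

Lemma sqn_zero : sqn (RtoC 0) = 0.
Proof. rewrite sqn_eq; simpl; ring. Qed.

Definition delta (m n : nat) : C := if Nat.eqb n m then RtoC 1 else RtoC 0.
Ltac dtac := intros ?n ?Hn; rewrite ?LdagL_val; unfold delta; rewrite (proj2 (Nat.eqb_neq _ _)) by assumption;
               unfold Cmult, Cconj, RtoC, Re, Im; simpl; ring.

Lemma claim2 l : self_adjoint (inH l 2) (LdagL l).
Proof. split; [split|split].
  - intros u [H _]. exact (H 0%nat (Nat.le_0_l _)).
  - intros v eps Hv Heps. set (a := fun m => sqn (v m)).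
    assert (HL : is_lim_seq (sum_n a) (Series a)) by exact (Series_correct a Hv).
    apply is_lim_seq_spec in HL. destruct (HL (mkposreal eps Heps)) as [N HN]. specialize (HN N (le_n N)).
    simpl in HN.
    exists (fun n => if (n <=? N)%nat then v n else RtoC 0). split.
    + apply inH_char. apply (ex_series_fin _ N). intros n Hn.
      destruct (Nat.leb_spec n N); [lia|]. rewrite sqn_zero; ring.
    + unfold norm2. set (c := fun m => sqn (seq_sub (fun n => if (n <=? N)%nat then v n else RtoC 0) v m)).
      assert (Hc : forall m, c m = if (m <=? N)%nat then 0 else a m).
      { intros m; unfold c, a, seq_sub. destruct (m <=? N)%nat; rewrite sqn_eq; [|rewrite sqn_eq];
        destruct (v m); unfold Cminus, Cplus, Copp, RtoC; simpl; ring. }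
      assert (Hcx : ex_series c).
      { apply (exR_le _ a); [|exact Hv]. intros m; rewrite Hc. unfold a. pose proof (sqn_nonneg (v m)).
        destruct (m <=? N)%nat; lra. }
      rewrite (Series_incr_n c (S N) ltac:(lia) Hcx). simpl Nat.pred.
      rewrite sum_f_zero by (intros k Hk; rewrite Hc; destruct (Nat.leb_spec k N); [reflexivity|lia]).
      rewrite (Series_ext (fun k => c (S N + k)%nat) (fun k => a (S N + k)%nat))
        by (intros k; rewrite Hc; destruct (Nat.leb_spec (S N + k) N); [lia|reflexivity]).
      pose proof (Series_incr_n a (S N) ltac:(lia) Hv) as HS. simpl Nat.pred in HS.
      rewrite sum_n_Reals in HN. apply Rabs_def2 in HN. lra.
  - intros u Hu. apply inH_char in Hu. unfold l2.
    apply (exR_le _ (fun n => W l 2 n * sqn (u n))); [|exact Hu]. intros n. rewrite LdagL_val, sqn_sc. unfold W.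
    pose proof (sqn_nonneg (u n)). pose proof (ff_nonneg l n). split; [nra|].
    apply Rmult_le_compat_r; [lra|]. apply pow_incr; lra.
  - intros v w. split.
    + intros [Hv [Hw H]].
      assert (Hpt : forall m, w m = Cmult (RtoC (ff l m)) (v m)).
      { intros m.
        assert (He : inH l 2 (delta m)).
        { rewrite inH_char; apply (ex_series_fin _ m); intros n Hn; unfold delta.
          rewrite (proj2 (Nat.eqb_neq n m)) by lia. rewrite sqn_zero; ring. }
        specialize (H (delta m) He). unfold inner in H.
        rewrite (Series_delta (fun k => Re (Cmult (Cconj (v k)) (LdagL l (delta m) k))) m) in H by dtac.
        rewrite (Series_delta (fun k => Im (Cmult (Cconj (v k)) (LdagL l (delta m) k))) m) in H by dtac.
        rewrite (Series_delta (fun k => Re (Cmult (Cconj (w k)) (delta m k))) m) in H by dtac.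
        rewrite (Series_delta (fun k => Im (Cmult (Cconj (w k)) (delta m k))) m) in H by dtac.
        injection H as H1 H2.
        rewrite LdagL_val in H1, H2. unfold delta in H1, H2. rewrite Nat.eqb_refl in H1, H2.
        destruct (v m), (w m). unfold Cmult, Cconj, RtoC, Re, Im in *; simpl in *.
        apply Ceq; simpl; nra. }
      split.
      * apply inH_char. unfold l2 in Hv, Hw.
        apply (exR_le _ (fun n => 2 * sqn (v n) + 2 * sqn (w n))); [|apply exR_plus; apply exR_scal; assumption].
        intros n. rewrite Hpt, sqn_sc. unfold W. pose proof (sqn_nonneg (v n)). pose proof (ff_nonneg l n).
        split; [apply Rmult_le_pos; [apply pow_le; lra| lra]|].
        replace (2 * sqn (v n) + 2 * (ff l n ^ 2 * sqn (v n))) with ((2 + 2 * ff l n ^ 2) * sqn (v n)) by ring.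
        apply Rmult_le_compat_r; [lra| ]. pose proof (pow2_ge_0 (ff l n - 1)) as Hq. replace ((ff l n - 1) ^ 2) with (ff l n ^ 2 - 2 * ff l n + 1) in Hq by ring. replace ((1 + ff l n) ^ 2) with (1 + 2 * ff l n + ff l n ^ 2) by ring. lra.
      * apply functional_extensionality. intros m. rewrite LdagL_val. apply Hpt.
    + intros [Hv ->]. split; [|split].
      * destruct Hv as [H _]. exact (H 0%nat (Nat.le_0_l _)).
      * apply inH_char in Hv. unfold l2.
        apply (exR_le _ (fun n => W l 2 n * sqn (v n))); [|exact Hv]. intros n. rewrite LdagL_val, sqn_sc. unfold W.
        pose proof (sqn_nonneg (v n)). pose proof (ff_nonneg l n). split; [nra|].
        apply Rmult_le_compat_r; [lra|]. apply pow_incr; lra.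
      * intros u Hu. unfold inner. f_equal; apply Series_ext; intros n; rewrite !LdagL_val;
        destruct (v n), (u n); unfold Cmult, Cconj, RtoC, Re, Im; simpl; ring.
Qed.

Lemma claim3 l (hl : (1 <= l)%nat) m : exists C : R, 0 <= C /\
      forall u, inH l (S m) u ->
        inH l m (Lop l u) /\ normH l m (Lop l u) <= C * normH l (S m) u.
Proof. exists 1. split; [lra|]. intros u Hu.
  pose proof Hu as Hu'. apply inH_char in Hu'.
  set (d := fun n => W l m n * ff l n * sqn (u n)).
  assert (Hd0 : forall n, 0 <= d n).
  { intros n; unfold d. apply Rmult_le_pos; [apply Rmult_le_pos; [apply W_nonneg|apply ff_nonneg]|apply sqn_nonneg]. }
  assert (Hd : ex_series d).
  { apply (exR_le _ (fun n => W l (S m) n * sqn (u n))); [|exact Hu']. intros n. split; [apply Hd0|].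
    unfold d. rewrite W_S. pose proof (W_nonneg l m n); pose proof (sqn_nonneg (u n)); pose proof (ff_nonneg l n). nra. }
  assert (Hds : ex_series (fun n => d (n + l)%nat)) by (apply ex_series_shift; exact Hd).
  assert (Hb : forall n, 0 <= W l m n * sqn (Lop l u n) <= d (n + l)%nat).
  { intros n. rewrite sqn_Lop. unfold d. pose proof (W_mono_n l m n (n + l) ltac:(lia)).
    pose proof (W_nonneg l m n). pose proof (ff_nonneg l (n + l)). pose proof (sqn_nonneg (u (n + l)%nat)).
    split; [apply Rmult_le_pos; [lra| apply Rmult_le_pos; lra]|].
    rewrite (Rmult_assoc (W l m (n + l)%nat)). apply Rmult_le_compat_r; [apply Rmult_le_pos; lra| lra]. }
  assert (Hin : inH l m (Lop l u)).
  { apply inH_char. apply (exR_le _ _ Hb Hds). }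
  split; [exact Hin|].
  rewrite (normH_eq l m) by (lia || exact Hin). rewrite (normH_eq l (S m)) by (lia || exact Hu).
  rewrite Rmult_1_l. apply sqrt_le_1_alt.
  eapply Rle_trans; [apply (Series_le _ _ Hb Hds)|].
  rewrite Series_shift0; [| lia | intros n Hn; unfold d; rewrite ff_small by exact Hn; ring | exact Hd].
  apply Series_le; [|exact Hu']. intros n; split; [apply Hd0|].
  unfold d. rewrite W_S. pose proof (W_nonneg l m n); pose proof (sqn_nonneg (u n)); pose proof (ff_nonneg l n). nra.
Qed.

Lemma Re_inner u v : Re (inner u v) = Series (fun m => Re (Cmult (Cconj (u m)) (v m))).
Proof. reflexivity. Qed.

Lemma claim4 l (hl : (1 <= l)%nat) u : inH l 6 u ->
      2 * Re (inner (Lam_pow l 2 (Gop l u)) (Lam_pow l 2 u))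
        + norm2 (Lam_pow l 2 (Lop l u)) <= 0.
Proof. intros Hu. apply inH_char in Hu.
  set (b := fun n => ff l n * ((1 + ff l n) ^ 2) ^ 2 * sqn (u n)).
  assert (Hb0 : forall n, 0 <= b n).
  { intros n; unfold b. apply Rmult_le_pos; [apply Rmult_le_pos; [apply ff_nonneg| apply pow_le, pow_le; pose proof (ff_nonneg l n); lra]|apply sqn_nonneg]. }
  assert (Hb : ex_series b).
  { apply (exR_le _ (fun n => W l 6 n * sqn (u n))); [|exact Hu]. intros n; split; [apply Hb0|].
    unfold b, W. pose proof (ff_nonneg l n) as Hf. pose proof (sqn_nonneg (u n)) as Hs.
    replace ((1 + ff l n) ^ 6) with ((1 + ff l n) ^ 2 * ((1 + ff l n) ^ 2) ^ 2) by ring.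
    apply Rmult_le_compat_r; [exact Hs|]. apply Rmult_le_compat_r; [apply pow_le, pow_le; lra|].
    simpl. nra. }
  rewrite Re_inner.
  rewrite (Series_ext _ (fun n => -/2 * b n)).
  2: { intros n. cbv beta. rewrite (Lam_pow_val l 2 u n), (Lam_pow_val l 2 (Gop l u) n). unfold Gop, seq_scal. cbv beta. rewrite LdagL_val. unfold b. rewrite sqn_eq.
       destruct (u n); unfold Cmult, Cconj, RtoC, Re; simpl; field. }
  rewrite Series_scal_l.
  unfold norm2.
  rewrite (Series_ext (fun n => sqn (Lam_pow l 2 (Lop l u) n)) (fun n => ((1 + ff l n) ^ 2) ^ 2 * (ff l (n + l) * sqn (u (n + l)%nat)))).
  2: { intros n. cbv beta. rewrite Lam_pow_val, sqn_sc, sqn_Lop. reflexivity. }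
  assert (Hle : Series (fun n => ((1 + ff l n) ^ 2) ^ 2 * (ff l (n + l) * sqn (u (n + l)%nat)))
                <= Series (fun n => b (n + l)%nat)).
  { apply Series_le; [|apply ex_series_shift; exact Hb]. intros n. unfold b.
    pose proof (ff_nonneg l n). pose proof (ff_nonneg l (n + l)). pose proof (sqn_nonneg (u (n + l)%nat)).
    pose proof (ff_mono l n (n + l) ltac:(lia)).
    assert (0 <= ((1 + ff l n) ^ 2) ^ 2) by (apply pow_le, pow_le; lra).
    assert (((1 + ff l n) ^ 2) ^ 2 <= ((1 + ff l (n + l)) ^ 2) ^ 2).
    { apply pow_incr; split; [apply pow_le; lra| apply pow_incr; lra]. }
    split; [apply Rmult_le_pos; [lra| apply Rmult_le_pos; lra]|].
    apply Rle_trans with (((1 + ff l (n + l)) ^ 2) ^ 2 * (ff l (n + l) * sqn (u (n + l)%nat)));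
      [apply Rmult_le_compat_r; [apply Rmult_le_pos; lra| lra]| right; ring]. }
  rewrite Series_shift0 in Hle; [| lia | intros n Hn; unfold b; rewrite ff_small by exact Hn; ring | exact Hb].
  lra.
Qed.

Theorem mainTheorem12 (l : nat) (hl : (1 <= l)%nat) :
  (forall (k : nat) (u : seqC),
      inH l k u <-> ex_series (fun m => (1 + INR m ^ (k * l)) * sqn (u m)))
  /\
  self_adjoint (inH l 2) (LdagL l)
  /\
  (forall m : nat, exists C : R, 0 <= C /\
      forall u, inH l (S m) u ->
        inH l m (Lop l u) /\ normH l m (Lop l u) <= C * normH l (S m) u)
  /\
  (forall u, inH l 6 u ->
      2 * Re (inner (Lam_pow l 2 (Gop l u)) (Lam_pow l 2 u))
        + norm2 (Lam_pow l 2 (Lop l u)) <= 0)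
  /\
  (forall u, inH l 6 u ->
      2 * Re (inner (Lam_pow l 2 (Gop l u)) (Lam_pow l 2 u))
        + norm2 (Lam_pow l 2 (Lop l u)) <= 0 * norm2 (Lam_pow l 2 u)).
Proof.
  split; [intros; apply claim1; exact hl|].
  split; [apply claim2|].
  split; [intros; apply claim3; exact hl|].
  split; [intros; apply claim4; assumption|].
  intros u Hu. rewrite Rmult_0_l. apply claim4; assumption.
Qed.
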